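(* Assume the setting described in the context, and fix $x=(x_R,x_T)\in\mathbb{R}\times\mathbb{R}^2$ and an index $i$. Let $j=\pi(x,i)$, and suppose $a_i$ and $a_j$ lie on the same curve $\gamma$ of the environment, with arc-length abscissae $s_i,s_j$. Define the approximation error $$\psi_i:=(a_{\pi(0,i)}-a_{\pi(x,i)})\cdot n_i=(a_i-a_j)\cdot n_i .$$ Then $$(a_i+d_i(x)-a_{\pi(x,i)})\cdot n_i=(a_i+d_i(x)-a_{\pi(0,i)})\cdot n_i+\psi_i .$$ Hence the true ICP cost $\sum_i[(a_i+d_i(x)-a_{\pi(x,i)})\cdot n_i]^2$ equals $\sum_i[(a_i+d_i(x)-a_{\pi(0,i)})\cdot n_i+\psi_i]^2$. Moreover, if $\kappa\,|s_i-s_j|\le 1$, then $$|\psi_i|\le 8\,\kappa\,\|x_R\times a_i+x_T\|^2 .$$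
   Context: 2D setting. The environment is a finite union of pairwise disjoint $C^2$ curves in $\mathbb{R}^2$. Each curve $\gamma$ is parametrized by arc length $s$, so $\|\gamma'(s)\|=1$, and has curvature bounded by $\kappa\ge 0$, i.e. $\|\gamma''(s)\|\le\kappa$ for all $s$. A point cloud $a_1,\dots,a_N\in\mathbb{R}^2$ consists of distinct points on these curves. Write $a_k=\gamma(s_k)$, where $s_k$ is the arc-length abscissa of $a_k$ on the curve containing it. For each $i$, $n_i$ is a unit normal vector to that curve at $a_i$, so $n_i\cdot\gamma'(s_i)=0$. For a motion parameter $x=(x_R,x_T)\in\mathbb{R}\times\mathbb{R}^2$, the linearized displacement of $a_i$ is $d_i(x):=x_R\times a_i+x_T$. Here, for a scalar $x_R$ and $a=(a^1,a^2)$, $x_R\times a:=x_R(-a^2,a^1)$. $\pi(x,i)$ denotes an index $j\in\{1,\dots,N\}$ minimizing $\|a_i+d_i(x)-a_j\|$, i.e. closest-point matching of the displaced point to the original cloud. Note $\pi(0,i)=i$. *)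

(* Defs.v *)
From Stdlib Require Import Reals Lra Lia List.
Open Scope R_scope.

Definition vadd (u v : R * R) : R * R := (fst u + fst v, snd u + snd v).
Definition vsub (u v : R * R) : R * R := (fst u - fst v, snd u - snd v).
Definition dot (u v : R * R) : R := fst u * fst v + snd u * snd v.
Definition vnorm (u : R * R) : R := sqrt (dot u u).

Definition crossR (r : R) (a : R * R) : R * R := (- (r * snd a), r * fst a).

(* motion parameter x = (x_R, x_T); linearized displacement d(x) at a *)
Definition motion := (R * (R * R))%type.
Definition disp (x : motion) (a : R * R) : R * R := vadd (crossR (fst x) a) (snd x).

Record curve := mkCurve {
  cdom : R -> Prop;
  cpos : R -> R * R;
  cvel : R -> R * R;
  cacc : R -> R * R }.

Definition open_interval (D : R -> Prop) : Prop :=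
  (exists u, D u) /\
  (forall u v w, D u -> D v -> u <= w <= v -> D w) /\
  (forall u, D u -> exists e, 0 < e /\ forall w, Rabs (w - u) < e -> D w).

Definition is_arc_curve (kappa : R) (g : curve) : Prop :=
  open_interval (cdom g) /\
  forall s, cdom g s ->
    derivable_pt_lim (fun t => fst (cpos g t)) s (fst (cvel g s)) /\
    derivable_pt_lim (fun t => snd (cpos g t)) s (snd (cvel g s)) /\
    derivable_pt_lim (fun t => fst (cvel g t)) s (fst (cacc g s)) /\
    derivable_pt_lim (fun t => snd (cvel g t)) s (snd (cacc g s)) /\
    continuity_pt (fun t => fst (cacc g t)) s /\
    continuity_pt (fun t => snd (cacc g t)) s /\
    vnorm (cvel g s) = 1 /\
    vnorm (cacc g s) <= kappa.

Definition pairwise_disjoint (env : list curve) : Prop :=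
  forall p q g h, (p < length env)%nat -> (q < length env)%nat -> p <> q ->
    nth_error env p = Some g -> nth_error env q = Some h ->
    forall s t, cdom g s -> cdom h t -> cpos g s <> cpos h t.

Definition is_closest (N : nat) (a : nat -> R * R) (x : motion) (i j : nat) : Prop :=
  (j < N)%nat /\
  forall k, (k < N)%nat ->
    vnorm (vsub (vadd (a i) (disp x (a i))) (a j))
    <= vnorm (vsub (vadd (a i) (disp x (a i))) (a k)).

Fixpoint sumN (N : nat) (f : nat -> R) : R :=
  match N with O => 0 | S n => sumN n f + f n end.

(* Main.v *)
Require Import Defs.
From Stdlib Require Import Reals Lra Lia List.
Open Scope R_scope.

Lemma Rabs_le_between x y : Rabs x <= y <-> -y <= x <= y.
Proof. unfold Rabs; destruct (Rcase_abs x); split; intros; lra. Qed.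

Lemma mono2 (f g df dg : R -> R) (a b : R) : a <= b ->
  (forall t, a <= t <= b -> derivable_pt_lim f t (df t)) ->
  (forall t, a <= t <= b -> derivable_pt_lim g t (dg t)) ->
  (forall t, a <= t <= b -> df t <= dg t) ->
  f b - f a <= g b - g a.
Proof.
  intros Hab Hf Hg Hle. destruct (Req_dec a b) as [->|Hne]; [lra|].
  destruct (MVT_cor2 (fun t => g t - f t) (fun t => dg t - df t) a b) as [c [Hc Hc2]].
  - lra.
  - intros t Ht. exact (derivable_pt_lim_minus g f t _ _ (Hg t Ht) (Hf t Ht)).
  - assert (0 <= dg c - df c) by (assert (dfdg := Hle c ltac:(lra)); lra).
    assert (0 <= (dg c - df c) * (b - a)) by (apply Rmult_le_pos; lra). lra.
Qed.

Lemma dpoly (c e s0 t : R) :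
  derivable_pt_lim (fun u => c * u + e * ((u - s0) * (u - s0))) t (c + 2 * e * (t - s0)).
Proof.
  assert (H1 := derivable_pt_lim_id t).
  assert (H2 := derivable_pt_lim_const s0 t).
  assert (H3 := derivable_pt_lim_minus _ _ _ _ _ H1 H2).
  assert (H4 := derivable_pt_lim_mult _ _ _ _ _ H3 H3).
  assert (H5 := derivable_pt_lim_scal _ e _ _ H4).
  assert (H6 := derivable_pt_lim_scal _ c _ _ H1).
  assert (H7 := derivable_pt_lim_plus _ _ _ _ _ H6 H5).
  unfold mult_real_fct, plus_fct, mult_fct, minus_fct, id, fct_cte in H7.
  replace (c + 2 * e * (t - s0)) with (c * 1 + e * ((1 - 0) * (t - s0) + (t - s0) * (1 - 0))) by ring.
  exact H7.
Qed.

Lemma taylor2 (F F1 F2 : R -> R) (kappa s0 s1 v0 : R) :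
  0 <= kappa ->
  (forall t, Rmin s0 s1 <= t <= Rmax s0 s1 ->
     derivable_pt_lim F t (F1 t) /\ derivable_pt_lim F1 t (F2 t) /\ Rabs (F2 t) <= kappa) ->
  F1 s0 = v0 ->
  Rabs (F s1 - F s0 - v0 * (s1 - s0)) <= kappa / 2 * ((s1 - s0) * (s1 - s0)).
Proof.
  intros Hk H Hv.
  assert (HD : forall t, Rmin s0 s1 <= t <= Rmax s0 s1 -> derivable_pt_lim F t (F1 t)) by (intros; apply H; auto).
  assert (HD1 : forall t, Rmin s0 s1 <= t <= Rmax s0 s1 -> derivable_pt_lim F1 t (F2 t)) by (intros; apply H; auto).
  assert (HB : forall t, Rmin s0 s1 <= t <= Rmax s0 s1 -> Rabs (F2 t) <= kappa) by (intros; apply H; auto).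
  clear H.
  assert (Hmin := Rmin_l s0 s1). assert (Hmin2 := Rmin_r s0 s1).
  assert (Hmax := Rmax_l s0 s1). assert (Hmax2 := Rmax_r s0 s1).
  assert (G1 : forall t, Rmin s0 s1 <= t <= Rmax s0 s1 ->
     v0 - kappa * Rabs (t - s0) <= F1 t <= v0 + kappa * Rabs (t - s0)).
  { intros t Ht. destruct (Rle_dec s0 t).
    - rewrite Rabs_right by lra.
      assert (U := mono2 F1 (fun u => kappa * u + 0 * ((u - s0) * (u - s0))) F2
                (fun u => kappa + 2 * 0 * (u - s0)) s0 t r
                ltac:(intros; apply HD1; lra) ltac:(intros; apply dpoly)
                ltac:(intros u Hu; assert (W := HB u ltac:(lra)); apply (proj1 (Rabs_le_between _ _)) in W; lra)).
      assert (L := mono2 (fun u => (-kappa) * u + 0 * ((u - s0) * (u - s0))) F1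
                (fun u => -kappa + 2 * 0 * (u - s0)) F2 s0 t r
                ltac:(intros; apply dpoly) ltac:(intros; apply HD1; lra)
                ltac:(intros u Hu; assert (W := HB u ltac:(lra)); apply (proj1 (Rabs_le_between _ _)) in W; lra)).
      simpl in U, L. nra.
    - rewrite Rabs_left by lra.
      assert (U := mono2 F1 (fun u => kappa * u + 0 * ((u - s0) * (u - s0))) F2
                (fun u => kappa + 2 * 0 * (u - s0)) t s0 ltac:(lra)
                ltac:(intros; apply HD1; lra) ltac:(intros; apply dpoly)
                ltac:(intros u Hu; assert (W := HB u ltac:(lra)); apply (proj1 (Rabs_le_between _ _)) in W; lra)).
      assert (L := mono2 (fun u => (-kappa) * u + 0 * ((u - s0) * (u - s0))) F1
                (fun u => -kappa + 2 * 0 * (u - s0)) F2 t s0 ltac:(lra)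
                ltac:(intros; apply dpoly) ltac:(intros; apply HD1; lra)
                ltac:(intros u Hu; assert (W := HB u ltac:(lra)); apply (proj1 (Rabs_le_between _ _)) in W; lra)).
      simpl in U, L. nra. }
  apply Rabs_le_between.
  destruct (Rle_dec s0 s1).
  - rewrite Rmin_left in G1, HD by lra. rewrite Rmax_right in G1, HD by lra.
    assert (U := mono2 F (fun u => v0 * u + (kappa/2) * ((u - s0) * (u - s0))) F1
                (fun u => v0 + 2 * (kappa/2) * (u - s0)) s0 s1 r
                ltac:(intros; apply HD; lra) ltac:(intros; apply dpoly)
                ltac:(intros u Hu; assert (W := G1 u ltac:(lra)); rewrite Rabs_right in W; lra)).
    assert (L := mono2 (fun u => v0 * u + (-kappa/2) * ((u - s0) * (u - s0))) F
                (fun u => v0 + 2 * (-kappa/2) * (u - s0)) F1 s0 s1 r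
                ltac:(intros; apply dpoly) ltac:(intros; apply HD; lra)
                ltac:(intros u Hu; assert (W := G1 u ltac:(lra)); rewrite Rabs_right in W; lra)).
    simpl in U, L. split; nra.
  - rewrite Rmin_right in G1, HD by lra. rewrite Rmax_left in G1, HD by lra.
    assert (U := mono2 F (fun u => v0 * u + (-kappa/2) * ((u - s0) * (u - s0))) F1
                (fun u => v0 + 2 * (-kappa/2) * (u - s0)) s1 s0 ltac:(lra)
                ltac:(intros; apply HD; lra) ltac:(intros; apply dpoly)
                ltac:(intros u Hu; assert (W := G1 u ltac:(lra)); rewrite Rabs_left1 in W; lra)).
    assert (L := mono2 (fun u => v0 * u + (kappa/2) * ((u - s0) * (u - s0))) F
                (fun u => v0 + 2 * (kappa/2) * (u - s0)) F1 s1 s0 ltac:(lra)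
                ltac:(intros; apply dpoly) ltac:(intros; apply HD; lra)
                ltac:(intros u Hu; assert (W := G1 u ltac:(lra)); rewrite Rabs_left1 in W; lra)).
    simpl in U, L. split; nra.
Qed.
Lemma dot_ge0 u : 0 <= dot u u.
Proof. unfold dot; nra. Qed.

Lemma CS u w : Rabs (dot u w) <= vnorm u * vnorm w.
Proof.
  unfold vnorm. rewrite <- sqrt_mult_alt by apply dot_ge0.
  rewrite <- sqrt_Rsqr_abs. apply sqrt_le_1_alt.
  unfold Rsqr, dot. destruct u as [u1 u2], w as [w1 w2]; simpl.
  assert (0 <= (u1*w2 - u2*w1)*(u1*w2 - u2*w1)) by apply Rle_0_sqr. nra.
Qed.

Lemma vnorm_ge0 u : 0 <= vnorm u.
Proof. apply sqrt_pos. Qed.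

Lemma tri A B : vnorm (vsub A B) <= vnorm A + vnorm B.
Proof.
  assert (HC := CS A B). apply Rabs_le_between in HC.
  assert (hA := vnorm_ge0 A). assert (hB := vnorm_ge0 B).
  assert (eA : vnorm A * vnorm A = dot A A) by (apply sqrt_sqrt, dot_ge0).
  assert (eB : vnorm B * vnorm B = dot B B) by (apply sqrt_sqrt, dot_ge0).
  unfold vnorm at 1. rewrite <- (sqrt_Rsqr (vnorm A + vnorm B)) by lra.
  apply sqrt_le_1_alt. unfold Rsqr.
  replace (dot (vsub A B) (vsub A B)) with (dot A A - 2 * dot A B + dot B B)
    by (unfold dot, vsub; simpl; ring).
  rewrite <- eA, <- eB. nra.
Qed.

Lemma dlin (X Y : R -> R) dX dY t c1 c2 w1 w2 :
  derivable_pt_lim X t dX -> derivable_pt_lim Y t dY ->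
  derivable_pt_lim (fun u => (X u - c1) * w1 + (Y u - c2) * w2) t (dX * w1 + dY * w2).
Proof.
  intros HX HY.
  assert (H1 := derivable_pt_lim_minus _ _ _ _ _ HX (derivable_pt_lim_const c1 t)).
  assert (H2 := derivable_pt_lim_minus _ _ _ _ _ HY (derivable_pt_lim_const c2 t)).
  assert (H3 := derivable_pt_lim_mult _ _ _ _ _ H1 (derivable_pt_lim_const w1 t)).
  assert (H4 := derivable_pt_lim_mult _ _ _ _ _ H2 (derivable_pt_lim_const w2 t)).
  assert (H5 := derivable_pt_lim_plus _ _ _ _ _ H3 H4).
  unfold plus_fct, mult_fct, minus_fct, fct_cte in H5.
  replace (dX * w1 + dY * w2) with ((dX - 0) * w1 + (X t - c1) * 0 + ((dY - 0) * w2 + (Y t - c2) * 0)) by ring.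
  exact H5.
Qed.

Lemma dlin0 (X Y : R -> R) dX dY t w1 w2 :
  derivable_pt_lim X t dX -> derivable_pt_lim Y t dY ->
  derivable_pt_lim (fun u => X u * w1 + Y u * w2) t (dX * w1 + dY * w2).
Proof.
  intros HX HY.
  assert (H3 := derivable_pt_lim_mult _ _ _ _ _ HX (derivable_pt_lim_const w1 t)).
  assert (H4 := derivable_pt_lim_mult _ _ _ _ _ HY (derivable_pt_lim_const w2 t)).
  assert (H5 := derivable_pt_lim_plus _ _ _ _ _ H3 H4).
  unfold plus_fct, mult_fct, fct_cte in H5.
  replace (dX * w1 + dY * w2) with (dX * w1 + X t * 0 + (dY * w2 + Y t * 0)) by ring.
  exact H5.
Qed.

Lemma curve_taylor kappa g s0 s1 w :
  0 <= kappa -> is_arc_curve kappa g -> cdom g s0 -> cdom g s1 -> vnorm w = 1 ->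
  Rabs (dot (vsub (cpos g s1) (cpos g s0)) w - dot (cvel g s0) w * (s1 - s0))
    <= kappa / 2 * ((s1 - s0) * (s1 - s0)).
Proof.
  intros Hk [[_ [Hconv _]] Hd] H0 H1 Hw.
  set (P := cpos g s0).
  assert (E : dot (vsub (cpos g s1) P) w = dot (vsub (cpos g s1) P) w - dot (vsub (cpos g s0) P) w).
  { unfold P, dot, vsub; simpl. ring. }
  rewrite E.
  apply (taylor2 (fun t => dot (vsub (cpos g t) P) w) (fun t => dot (cvel g t) w)
          (fun t => dot (cacc g t) w) kappa s0 s1); auto.
  intros t Ht.
  assert (Dt : cdom g t).
  { apply (Hconv (Rmin s0 s1) (Rmax s0 s1)); auto;
    unfold Rmin, Rmax; destruct (Rle_dec s0 s1); auto. }
  destruct (Hd t Dt) as (d1 & d2 & d3 & d4 & _ & _ & _ & Hacc).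
  split; [|split].
  - unfold dot, vsub. simpl. apply dlin; auto.
  - unfold dot. apply dlin0; auto.
  - eapply Rle_trans; [apply CS|]. rewrite Hw. lra.
Qed.

Lemma sumN_ext N f g : (forall k, f k = g k) -> sumN N f = sumN N g.
Proof. intros H; induction N; simpl; [reflexivity|]; rewrite IHN, H; reflexivity. Qed.

Theorem mainTheorem2
  (kappa : R) (env : list curve)
  (N : nat) (a : nat -> R * R) (s : nat -> R) (c : nat -> curve)
  (n : nat -> R * R) (pi : motion -> nat -> nat)
  (x : motion) (i : nat) :
  0 <= kappa ->
  (forall g, In g env -> is_arc_curve kappa g) ->
  pairwise_disjoint env ->
  (forall k, (k < N)%nat ->
     In (c k) env /\ cdom (c k) (s k) /\ a k = cpos (c k) (s k)) ->
  (forall k l, (k < N)%nat -> (l < N)%nat -> k <> l -> a k <> a l) ->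
  (forall k, (k < N)%nat ->
     vnorm (n k) = 1 /\ dot (n k) (cvel (c k) (s k)) = 0) ->
  (forall y k, (k < N)%nat -> is_closest N a y k (pi y k)) ->
  (i < N)%nat ->
  c (pi x i) = c i ->
  let psi := fun k => dot (vsub (a (pi (0, (0, 0)) k)) (a (pi x k))) (n k) in
  let j := pi x i in
  dot (vsub (vadd (a i) (disp x (a i))) (a (pi x i))) (n i)
    = dot (vsub (vadd (a i) (disp x (a i))) (a (pi (0, (0, 0)) i))) (n i) + psi i /\
  sumN N (fun k => (dot (vsub (vadd (a k) (disp x (a k))) (a (pi x k))) (n k)) ^ 2)
    = sumN N (fun k =>
        (dot (vsub (vadd (a k) (disp x (a k))) (a (pi (0, (0, 0)) k))) (n k) + psi k) ^ 2) /\
  (kappa * Rabs (s i - s j) <= 1 ->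
     Rabs (psi i) <= 8 * kappa * (vnorm (disp x (a i))) ^ 2).
Proof.
  intros Hk Henv Hdisj Hpt Hdist Hn Hcl Hi Hc psi j.
  split; [|split].
  - unfold psi, dot, vsub; simpl; ring.
  - apply sumN_ext. intro k. unfold psi, dot, vsub; simpl; ring.
  - intro Hks.
    set (p0 := pi (0, (0, 0)) i).
    assert (Hp0 : a p0 = a i).
    { destruct (Hcl (0, (0, 0)) i Hi) as [_ Hm]. specialize (Hm i Hi). fold p0 in Hm.
      assert (E : vsub (vadd (a i) (disp (0, (0, 0)) (a i))) (a i) = (0, 0)).
      { unfold vsub, vadd, disp, crossR; simpl. f_equal; ring. }
      rewrite E in Hm. unfold vnorm at 2 in Hm. unfold dot in Hm; simpl in Hm.
      replace (0 * 0 + 0 * 0) with 0 in Hm by ring. rewrite sqrt_0 in Hm.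
      assert (Z : dot (vsub (vadd (a i) (disp (0, (0, 0)) (a i))) (a p0))
                    (vsub (vadd (a i) (disp (0, (0, 0)) (a i))) (a p0)) = 0).
      { apply sqrt_eq_0; [apply dot_ge0|]. apply Rle_antisym; [exact Hm|apply sqrt_pos]. }
      destruct (a i) as [ai1 ai2] eqn:Ea, (a p0) as [b1 b2].
      unfold dot, vsub, vadd, disp, crossR in Z; simpl in Z.
      assert (Z2 : (ai1-b1)*(ai1-b1) + (ai2-b2)*(ai2-b2) = 0) by (rewrite <- Z; ring).
      assert (q1 := Rle_0_sqr (ai1-b1)). assert (q2 := Rle_0_sqr (ai2-b2)). unfold Rsqr in q1, q2.
      assert (e1 : ai1 = b1) by nra. assert (e2 : ai2 = b2) by nra. subst; reflexivity. }
    destruct (Hcl x i Hi) as [Hj Hmin]. fold j in Hj, Hmin.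
    destruct (Hpt i Hi) as (Ein & Di & Ai).
    destruct (Hpt j Hj) as (_ & Dj & Aj).
    fold j in Hc. rewrite Hc in Dj, Aj.
    destruct (Hn i Hi) as [Hni Hnv].
    set (g := c i) in *.
    assert (Harc := Henv g Ein).
    set (D := s j - s i).
    assert (T1 := curve_taylor kappa g (s i) (s j) (n i) Hk Harc Di Dj Hni).
    assert (Ev : dot (cvel g (s i)) (n i) = 0) by (rewrite <- Hnv; unfold dot; ring).
    rewrite Ev in T1. fold D in T1.
    assert (Epsi : psi i = - dot (vsub (cpos g (s j)) (cpos g (s i))) (n i)).
    { unfold psi. fold p0 j. rewrite Hp0, Ai, Aj. unfold dot, vsub; simpl; ring. }
    destruct (proj2 Harc (s i) Di) as (_ & _ & _ & _ & _ & _ & Hu & _).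
    assert (T2 := curve_taylor kappa g (s i) (s j) (cvel g (s i)) Hk Harc Di Dj Hu).
    assert (Euu : dot (cvel g (s i)) (cvel g (s i)) = 1).
    { rewrite <- (sqrt_sqrt (dot _ _)) by apply dot_ge0. fold (vnorm (cvel g (s i))). rewrite Hu; ring. }
    rewrite Euu in T2. fold D in T2.
    set (ch := vsub (cpos g (s j)) (cpos g (s i))) in *.
    assert (C2 := CS ch (cvel g (s i))). rewrite Hu in C2.
    set (P := vadd (a i) (disp x (a i))) in *.
    assert (Hm := Hmin i Hi).
    assert (Ed : vsub P (a i) = disp x (a i)).
    { unfold P, vsub, vadd. destruct (disp x (a i)); simpl. f_equal; ring. }
    rewrite Ed in Hm.
    assert (Ech : ch = vsub (vsub P (a i)) (vsub P (a j))).
    { unfold ch. rewrite <- Ai, <- Aj. unfold vsub; simpl. f_equal; ring. }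
    assert (Tr := tri (vsub P (a i)) (vsub P (a j))). rewrite <- Ech, Ed in Tr.
    set (V := vnorm (disp x (a i))) in *.
    assert (HV : 0 <= V) by apply vnorm_ge0.
    assert (Hch : vnorm ch <= 2 * V) by lra.
    apply Rabs_le_between in T1. apply Rabs_le_between in T2.
    assert (HabsD : Rabs D <= 2 * vnorm ch).
    { assert (kappa * Rabs D <= 1) by (unfold D; rewrite Rabs_minus_sym; exact Hks).
      unfold Rabs in *. destruct (Rcase_abs D); destruct (Rcase_abs (dot ch (cvel g (s i))));
      nra. }
    assert (HD2 : D * D <= 16 * (V * V)).
    { assert (0 <= vnorm ch) by apply vnorm_ge0.
      assert (Rabs D * Rabs D <= (4 * V) * (4 * V)) by (apply Rmult_le_compat; try apply Rabs_pos; lra).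
      rewrite <- Rabs_mult in H0. rewrite Rabs_right in H0 by nra. nra. }
    rewrite Epsi, Rabs_Ropp. apply Rabs_le_between. nra.
Qed.
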